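(* Let $A$ be a semiprime $2$-torsion free associative algebra and let $Q$ be a subalgebra of $Q_s(A)$ containing $A$. Then $A^{(-)}/Z(A)$ and $Q^{(-)}/Z(Q)$ are semiprime Lie algebras, the natural map $A^{(-)}/Z(A)\to Q^{(-)}/Z(Q)$ is injective, and (identifying $A^{(-)}/Z(A)$ with its image) $Q^{(-)}/Z(Q)$ is a Lie algebra of quotients of $A^{(-)}/Z(A)$.
   Context: Algebras are over a commutative unital ring $\Phi$; associative algebras need not be unital. For an associative algebra $A$, $A^{(-)}$ is the Lie algebra with the same module and bracket $[x,y]=xy-yx$; $Z(A)$ is the center. $A$ is $2$-torsion free if $2x=0$ implies $x=0$. For semiprime $A$, $Q^l_{\max}(A)$ denotes the maximal left (Utumi) quotient algebra and $Q_s(A)$ the Martindale symmetric algebra of quotients, which consists of those $q\in Q^l_{\max}(A)$ for which there is an essential ideal $I$ of $A$ with $Iq+qI\subseteq A$. A Lie algebra $L$ is semiprime if $[I,I]\neq 0$ for each nonzero ideal $I$. For a Lie subalgebra $L\subseteq Q$, $Q$ is an algebra of quotients of $L$ if for every nonzero $q\in Q$ there is an ideal $I$ of $L$ with $\mathrm{Ann}_L(I)=0$ (where $\mathrm{Ann}_L(I)=\{a\in L:[a,I]=0\}$) and $0\ne[I,q]\subseteq L$. *)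

(* Defs.v *)
From HB Require Import structures.
From mathcomp Require Import all_boot all_order all_algebra.
Set Implicit Arguments. Unset Strict Implicit. Unset Printing Implicit Defensive.
Import GRing.Theory.
Local Open Scope ring_scope.

Definition vset (V : Type) := V -> Prop.

Section Defs.
Variables (Phi : comPzRingType) (V : lmodType Phi) (mul : V -> V -> V).

Definition is_assoc_alg : Prop :=
  [/\ forall x y z, mul x (mul y z) = mul (mul x y) z,
      forall x y z, mul (x + y) z = mul x z + mul y z,
      forall x y z, mul x (y + z) = mul x y + mul x z,
      forall (a : Phi) x y, mul (a *: x) y = a *: mul x y &
      forall (a : Phi) x y, mul x (a *: y) = a *: mul x y].

Definition submod (S : vset V) : Prop :=
  [/\ S 0, forall x y, S x -> S y -> S (x + y) &
      forall (a : Phi) x, S x -> S (a *: x)].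

Definition subalg (S : vset V) : Prop :=
  submod S /\ forall x y, S x -> S y -> S (mul x y).

Definition alg_ideal (A I : vset V) : Prop :=
  [/\ submod I, (forall x, I x -> A x),
      (forall a x, A a -> I x -> I (mul a x)) &
      (forall a x, A a -> I x -> I (mul x a))].

Definition semiprime_alg (A : vset V) : Prop :=
  forall I, alg_ideal A I -> (forall x y, I x -> I y -> mul x y = 0) ->
    forall x, I x -> x = 0.

Definition two_torsion_free (A : vset V) : Prop :=
  forall x, A x -> x *+ 2 = 0 -> x = 0.

Definition essential_ideal (A I : vset V) : Prop :=
  alg_ideal A I /\
  forall J, alg_ideal A J -> (exists y, J y /\ y <> 0) ->
    exists x, I x /\ J x /\ x <> 0.

(* (V, mul) is (a copy of) the Martindale symmetric algebra of quotients
   Q_s(A) of the subalgebra A, via its standard characterization. *)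
Definition is_sym_quotients (A : vset V) : Prop :=
  [/\ subalg A,
      (forall q, exists I, essential_ideal A I /\
          forall x, I x -> A (mul x q) /\ A (mul q x)),
      (forall q I, essential_ideal A I ->
          ((forall x, I x -> mul x q = 0) \/ (forall x, I x -> mul q x = 0)) ->
          q = 0) &
      (forall I (f g : V -> V), essential_ideal A I ->
          (forall x, I x -> A (f x) /\ A (g x)) ->
          (forall x y, I x -> I y -> f (x + y) = f x + f y /\ g (x + y) = g x + g y) ->
          (forall (a : Phi) x, I x -> f (a *: x) = a *: f x /\ g (a *: x) = a *: g x) ->
          (forall x r, I x -> A r -> f (mul x r) = mul (f x) r) ->
          (forall x r, I x -> A r -> g (mul r x) = mul r (g x)) ->
          (forall x y, I x -> I y -> mul (g x) y = mul x (f y)) ->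
          exists q, forall x, I x -> f x = mul q x /\ g x = mul x q)].

Definition center (S : vset V) : vset V :=
  fun z => S z /\ forall a, S a -> mul z a = mul a z.

Definition lbr (x y : V) : V := mul x y - mul y x.

(* ---- Lie algebras of the form L/N, with L a Lie subalgebra of V^(-) and
   N an ideal of L.  An element of L/N is the class of some x with L x;
   x and y define the same class iff N (x - y).  A subset of L/N is
   represented by the saturated subset of L of the representatives of its
   elements. ---- *)

Definition lq_subset (L N J : vset V) : Prop :=
  (forall x, J x -> L x) /\
  (forall x y, J x -> L y -> N (x - y) -> J y).

Definition lq_ideal (L N J : vset V) : Prop :=
  [/\ lq_subset L N J, J 0,
      (forall x y, J x -> J y -> J (x + y)),
      (forall (a : Phi) x, J x -> J (a *: x)) &
      (forall a x, L a -> J x -> J (lbr a x))].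

Definition lq_is_zero (N J : vset V) : Prop := forall x, J x -> N x.

Definition lq_semiprime (L N : vset V) : Prop :=
  forall J, lq_ideal L N J -> ~ lq_is_zero N J ->
    exists x y, [/\ J x, J y & ~ N (lbr x y)].

Definition lq_ann_zero (S N J : vset V) : Prop :=
  forall a, S a -> (forall x, J x -> N (lbr a x)) -> N a.

Definition lq_algebra_of_quotients (L S N : vset V) : Prop :=
  forall q, L q -> ~ N q ->
    exists J, [/\ lq_ideal S N J, lq_ann_zero S N J,
                 (exists x, J x /\ ~ N (lbr x q)) &
                 (forall x, J x -> S (lbr x q))].

(* image of A^(-)/Z(A) in Q^(-)/Z(Q): representatives A + Z(Q) *)
Definition sum_set (A B : vset V) : vset V :=
  fun x => exists a b, [/\ A a, B b & x = a + b].

End Defs.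

(* Main.v *)
Require Import Defs.
From HB Require Import structures.
From mathcomp Require Import all_boot all_order all_algebra.
From Stdlib Require Import Classical.
Set Implicit Arguments. Unset Strict Implicit. Unset Printing Implicit Defensive.
Import GRing.Theory.
Local Open Scope ring_scope.

Section Alg.
Set Default Proof Using "All".
Variables (Phi : comPzRingType) (V : lmodType Phi) (mul : V -> V -> V).
Hypothesis HA : is_assoc_alg mul.

Lemma mulA x y z : mul x (mul y z) = mul (mul x y) z.
Proof. by case: HA. Qed.
Lemma mulDl x y z : mul (x + y) z = mul x z + mul y z.
Proof. by case: HA. Qed.
Lemma mulDr x y z : mul x (y + z) = mul x y + mul x z.
Proof. by case: HA. Qed.
Lemma mulZl a x y : mul (a *: x) y = a *: mul x y.
Proof. by case: HA. Qed.
Lemma mulZr a x y : mul x (a *: y) = a *: mul x y.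
Proof. by case: HA. Qed.
Lemma mul0l y : mul 0 y = 0.
Proof. by rewrite -(scale0r (0:V)) mulZl !scale0r. Qed.
Lemma mul0r y : mul y 0 = 0.
Proof. by rewrite -(scale0r (0:V)) mulZr !scale0r. Qed.
Lemma mulNl x y : mul (- x) y = - mul x y.
Proof. by rewrite -scaleN1r mulZl scaleN1r. Qed.
Lemma mulNr x y : mul y (- x) = - mul y x.
Proof. by rewrite -scaleN1r mulZr scaleN1r. Qed.
Lemma mulBl x y z : mul (x - y) z = mul x z - mul y z.
Proof. by rewrite mulDl mulNl. Qed.
Lemma mulBr x y z : mul z (x - y) = mul z x - mul z y.
Proof. by rewrite mulDr mulNr. Qed.
Lemma mul2l x y : mul (x *+ 2) y = (mul x y) *+ 2.
Proof. by rewrite !mulr2n mulDl. Qed.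
Lemma mul2r x y : mul y (x *+ 2) = (mul y x) *+ 2.
Proof. by rewrite !mulr2n mulDr. Qed.

Lemma lbrC x y : lbr mul x y = - lbr mul y x.
Proof. by rewrite /lbr opprB. Qed.
Lemma lbrDr a u v : lbr mul a (u + v) = lbr mul a u + lbr mul a v.
Proof. by rewrite /lbr mulDr mulDl opprD addrACA. Qed.
Lemma lbrDl a u v : lbr mul (u + v) a = lbr mul u a + lbr mul v a.
Proof. by rewrite /lbr mulDr mulDl opprD addrACA. Qed.
Lemma lbr2l x y : lbr mul (x *+ 2) y = (lbr mul x y) *+ 2.
Proof. by rewrite /lbr mul2l mul2r mulrnBl. Qed.
Lemma lbr_der a x y :
  lbr mul a (mul x y) = mul (lbr mul a x) y + mul x (lbr mul a y).
Proof. by rewrite /lbr mulBl mulBr !mulA addrA subrK. Qed.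
Lemma lbr_ra a y : lbr mul a (mul y a) = mul (lbr mul a y) a.
Proof. by rewrite /lbr mulBl !mulA. Qed.


Lemma submodN (S : vset V) x : submod S -> S x -> S (- x).
Proof. by case=> _ _ HZ Sx; rewrite -scaleN1r; apply: HZ. Qed.
Lemma submodB (S : vset V) x y : submod S -> S x -> S y -> S (x - y).
Proof. move=> hS Sx Sy; case: (hS) => _ HD _; apply: HD => //; exact: submodN. Qed.
Lemma subalg_lbr (S : vset V) x y : subalg mul S -> S x -> S y -> S (lbr mul x y).
Proof. by case=> hS hM Sx Sy; apply: submodB => //; apply: hM. Qed.

Lemma center_sub (S : vset V) z : center mul S z -> S z.
Proof. by case. Qed.
Lemma center_comm (S : vset V) z a : center mul S z -> S a -> mul a z = mul z a.
Proof. by case=> _ h Sa; rewrite h. Qed.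
Lemma center_submod (S : vset V) : submod S -> submod (center mul S).
Proof.
case=> S0 SD SZ; split.
- by split=> // a _; rewrite mul0l mul0r.
- move=> x y [Sx hx] [Sy hy]; split; first exact: SD.
  by move=> a Sa; rewrite mulDl mulDr hx // hy.
- move=> c x [Sx hx]; split; first exact: SZ.
  by move=> a Sa; rewrite mulZl mulZr hx.
Qed.
Lemma center_lbr (S : vset V) z y : center mul S z -> S y ->
  lbr mul z y = 0 /\ lbr mul y z = 0.
Proof. by case=> _ h Sy; rewrite /lbr h // subrr. Qed.

Lemma sp0 (S : vset V) b : subalg mul S -> semiprime_alg mul S -> S b ->
  mul b b = 0 -> (forall z, S z -> mul b (mul z b) = 0) -> b = 0.
Proof.
move=> [[S0 SD SZ] SM] hsp Sb bb bzb.
pose Imin x := forall J, alg_ideal mul S J -> J b -> J x.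
pose K' y := [/\ S y, mul b y = 0 & forall a, S a -> mul b (mul a y) = 0].
pose K x := S x /\ forall y, Imin y -> mul x y = 0.
have idS : alg_ideal mul S S by rewrite /alg_ideal /submod; split => // a x Sa Sx; apply: SM.
have idI : alg_ideal mul S Imin.
  rewrite /alg_ideal /submod; split; [split|..].
  - by move=> J [[]].
  - by move=> x y hx hy J hJ Jb; case: (hJ) => [[_ JD _] _ _ _]; apply: JD; [apply: hx|apply: hy].
  - by move=> c x hx J hJ Jb; case: (hJ) => [[_ _ JZ] _ _ _]; apply: JZ; apply: hx.
  - by move=> x hx; apply: hx.
  - by move=> a x Sa hx J hJ Jb; case: (hJ) => [_ _ JL _]; apply: JL => //; apply: hx.
  - by move=> a x Sa hx J hJ Jb; case: (hJ) => [_ _ _ JR]; apply: JR => //; apply: hx.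
have idK' : alg_ideal mul S K'.
  rewrite /alg_ideal /submod; split; [split|..].
  - by split => //; rewrite ?mul0r // => a _; rewrite !mul0r.
  - move=> x y [Sx bx hx] [Sy by' hy]; split; first exact: SD.
      by rewrite mulDr bx by' addr0.
    by move=> a Sa; rewrite mulDr mulDr hx // hy // addr0.
  - move=> c x [Sx bx hx]; split; first exact: SZ.
      by rewrite mulZr bx scaler0.
    by move=> a Sa; rewrite mulZr mulZr hx // scaler0.
  - by move=> x [].
  - move=> a x Sa [Sx bx hx]; split; first exact: SM.
      exact: hx.
    by move=> a' Sa'; rewrite (mulA a') hx //; apply: SM.
  - move=> a x Sa [Sx bx hx]; split; first exact: SM.
      by rewrite mulA bx mul0l.
    by move=> a' Sa'; rewrite mulA mulA -(mulA b) hx // mul0l.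
have idK : alg_ideal mul S K.
  rewrite /alg_ideal /submod; split; [split|..].
  - by split => // y _; rewrite mul0l.
  - move=> x y [Sx hx] [Sy hy]; split; first exact: SD.
    by move=> w Iw; rewrite mulDl hx // hy // addr0.
  - move=> c x [Sx hx]; split; first exact: SZ.
    by move=> w Iw; rewrite mulZl hx // scaler0.
  - by move=> x [].
  - move=> a x Sa [Sx hx]; split; first exact: SM.
    by move=> w Iw; rewrite -mulA hx // mul0r.
  - move=> a x Sa [Sx hx]; split; first exact: SM.
    move=> w Iw; rewrite -mulA hx //.
    by case: idI => _ _ hL _; apply: hL.
have Kb : K b.
  split=> // y Iy.
  by have [] := Iy K' idK'.
apply: (hsp Imin idI) => //.
move=> x y Ix Iy; have [_ h] := Ix K idK Kb; exact: h.
Qed.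

Lemma sp (S : vset V) b : subalg mul S -> semiprime_alg mul S -> S b ->
  (forall z, S z -> mul b (mul z b) = 0) -> b = 0.
Proof.
move=> hS hsp Sb bzb.
have SM : forall x y, S x -> S y -> S (mul x y) by case: hS.
have Sbb : S (mul b b) by apply: SM.
have bb : mul b b = 0.
  apply: (sp0 hS hsp Sbb).
    by rewrite -mulA bzb // mul0r.
  move=> z Sz.
  have -> : mul z (mul b b) = mul (mul z b) b by rewrite mulA.
  rewrite -mulA (mulA b (mul z b) b) bzb ?mul0l ?mul0r //; apply: (SM) => //; by apply: (SM).
exact: (sp0 hS hsp Sb bb bzb).
Qed.

Lemma cen_nil (S : vset V) c : subalg mul S -> semiprime_alg mul S ->
  center mul S c -> mul c c = 0 -> c = 0.
Proof.
move=> hS hsp [Sc hc] cc; apply: (sp hS hsp Sc) => z Sz.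
by rewrite -(hc z Sz) mulA cc mul0l.
Qed.


Lemma herstein (S : vset V) a : subalg mul S -> semiprime_alg mul S ->
  two_torsion_free S -> S a ->
  (forall x, S x -> lbr mul a (lbr mul a x) = 0) -> center mul S a.
Proof.
move=> hS hsp h2 Sa hd.
have SM : forall x y, S x -> S y -> S (mul x y) by case: hS.
have Sd : forall x, S x -> S (lbr mul a x) by move=> x Sx; apply: subalg_lbr.
have s1 : forall x y, S x -> S y -> mul (lbr mul a x) (lbr mul a y) = 0.
  move=> x y Sx Sy; apply: h2; first by apply: SM; apply: Sd.
  have := hd _ (SM _ _ Sx Sy).
  rewrite lbr_der lbrDr !lbr_der hd // hd // mul0l mul0r add0r addr0.
  by rewrite mulr2n.
have s2 : forall x z y, S x -> S z -> S y -> mul (lbr mul a x) (mul z (lbr mul a y)) = 0.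
  move=> x z y Sx Sz Sy.
  have := s1 _ _ Sx (SM _ _ Sz Sy).
  by rewrite lbr_der mulDr mulA s1 // mul0l add0r.
have s3 : forall x, S x -> lbr mul a x = 0.
  move=> x Sx; apply: (sp hS hsp (Sd _ Sx)) => z Sz; exact: s2.
split=> // b Sb; apply/eqP; rewrite -subr_eq0; apply/eqP; exact: s3.
Qed.

Lemma lie_semiprime (S : vset V) : subalg mul S -> semiprime_alg mul S ->
  two_torsion_free S -> lq_semiprime mul S (center mul S).
Proof.
move=> hS hsp h2 J [[JS Jsat] J0 JD JZ JL] nz.
have SM : forall x y, S x -> S y -> S (mul x y) by case: hS.
apply: NNPP => hno; apply: nz => a Ja.
have hc : forall x y, J x -> J y -> center mul S (lbr mul x y).
  move=> x y Jx Jy; apply: NNPP => hn; apply: hno; by exists x, y.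
have Sa := JS _ Ja.
have Jd : forall x, S x -> J (lbr mul a x).
  by move=> x Sx; rewrite lbrC -scaleN1r; apply: JZ; apply: JL.
apply: (herstein hS hsp h2 Sa) => x Sx.
set c := lbr mul a (lbr mul a x).
have cZ : center mul S c by apply: (hc) => //; exact: Jd.
have caZ : center mul S (mul c a).
  rewrite /c -!lbr_ra; apply: (hc) => //; apply: (Jd); exact: SM.
have hy : forall y, S y -> mul c (lbr mul a y) = 0.
  move=> y Sy; rewrite /lbr mulBr mulA -(center_comm caZ Sy).
  by rewrite mulA (center_comm cZ Sy) -mulA subrr.
apply: (cen_nil hS hsp cZ); apply: hy; apply: subalg_lbr => //; exact: subalg_lbr.
Qed.


Lemma ext_comm (A : vset V) p : is_sym_quotients mul A ->
  (forall x, A x -> mul x p = mul p x) -> forall q, mul p q = mul q p.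
Proof.
move=> [hA c2 c3 _] hp q.
have [E [hE hEq]] := c2 q.
have EA : forall x, E x -> A x by case: hE => [[_ h _ _] _].
apply/eqP; rewrite -subr_eq0; apply/eqP.
apply: (c3 _ E hE); right => e Ee.
have [Aeq Aqe] := hEq e Ee.
rewrite mulBl -!mulA -(hp _ Aqe) -(hp _ (EA _ Ee)) mulA subrr //.
Qed.

Lemma Q_semiprime (A Q : vset V) : is_sym_quotients mul A ->
  semiprime_alg mul A -> subalg mul Q -> (forall x, A x -> Q x) ->
  semiprime_alg mul Q.
Proof.
move=> [[[A0 AD AZ] AM] c2 c3 _] hsp hQ AQ I [[I0 ID IZ] IQ IL IR] II x Ix.
have [E [hE hEq]] := c2 x.
have EA : forall x, E x -> A x by case: hE => [[_ h _ _] _].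
pose K y := A y /\ I y.
have idK : alg_ideal mul A K.
  rewrite /alg_ideal /submod; split; [split|..].
  - by split.
  - by move=> u v [Au Iu] [Av Iv]; split; [apply: AD|apply: ID].
  - by move=> c u [Au Iu]; split; [apply: AZ|apply: IZ].
  - by move=> u [].
  - by move=> a u Aa [Au Iu]; split; [apply: AM|apply: IL => //; apply: AQ].
  - by move=> a u Aa [Au Iu]; split; [apply: AM|apply: IR => //; apply: AQ].
have K0 : forall y, K y -> y = 0.
  apply: (hsp K idK) => u v [_ Iu] [_ Iv]; exact: II.
apply: (c3 _ E hE); left => e Ee.
apply: K0; split; first by case: (hEq e Ee).
by apply: IL => //; apply: AQ; apply: EA.
Qed.

Lemma Q_2tf (A Q : vset V) : is_sym_quotients mul A ->
  two_torsion_free A -> two_torsion_free Q.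
Proof.
move=> [_ c2 c3 _] h2 x _ x2.
have [E [hE hEq]] := c2 x.
apply: (c3 _ E hE); left => e Ee.
apply: h2; first by case: (hEq e Ee).
by rewrite -mul2r x2 mul0r.
Qed.

Lemma KL (A Q : vset V) I p : is_sym_quotients mul A ->
  semiprime_alg mul A -> two_torsion_free A ->
  subalg mul Q -> (forall x, A x -> Q x) -> essential_ideal mul A I -> Q p ->
  (forall i, I i -> center mul Q (lbr mul p i)) -> center mul Q p.
Proof.
move=> hsym hsp h2 hQ AQ hI Qp hc.
have hspQ := Q_semiprime hsym hsp hQ AQ.
have h2Q : two_torsion_free Q := Q_2tf (Q:=Q) hsym h2.
have QM : forall x y, Q x -> Q y -> Q (mul x y) by case: hQ.
have [[_ IA IL IR] _] := hI.
have IQ : forall i, I i -> Q i by move=> i Ii; apply: AQ; apply: IA.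
have s1 : forall i, I i -> lbr mul p i = 0.
  move=> i Ii; set c := lbr mul p i.
  have cZ : center mul Q c by apply: hc.
  have ciZ : center mul Q (mul c i).
    have h2Z : center mul Q ((mul c i) *+ 2).
      have := hc _ (IL _ _ (IA _ Ii) Ii).
      by rewrite lbr_der -/c (center_comm cZ (IQ _ Ii)) mulr2n.
    split; first by apply: QM => //; [case: cZ|apply: IQ].
    move=> y Qy; apply/eqP; rewrite -subr_eq0; apply/eqP.
    apply: h2Q; first by apply: subalg_lbr => //; apply: QM => //; [case: cZ|apply: IQ].
    by rewrite -lbr2l; exact: (center_lbr h2Z Qy).1.
  apply: (cen_nil hQ hspQ cZ).
  rewrite {2}/c /lbr mulBr mulA -(center_comm cZ Qp) -mulA.
  by rewrite (center_comm ciZ Qp) mulA subrr.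
have s2 : forall x, A x -> mul x p = mul p x.
  move=> x Ax; apply/eqP; rewrite eq_sym -subr_eq0; apply/eqP.
  case: hsym => _ _ c3 _; apply: (c3 _ I hI); right => i Ii.
  have pi : mul p i = mul i p.
    by have := s1 _ Ii; rewrite /lbr => /eqP; rewrite subr_eq0 => /eqP.
  rewrite mulBl.
  have -> : mul (mul x p) i = mul (mul x i) p by rewrite -mulA pi mulA.
  rewrite -mulA; exact: s1 _ (IL _ _ Ax Ii).
split=> // a Qa; exact: ext_comm hsym s2 a.
Qed.

End Alg.

Lemma zmod_aux (V : zmodType) (e z y : V) : y - e = z - (e + z - y).
Proof. by rewrite opprB addrCA opprD (addrCA z) subrr addr0. Qed.

Theorem mainTheorem3 (Phi : comPzRingType) (V : lmodType Phi)
    (mul : V -> V -> V) (A Q : vset V) :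
  is_assoc_alg mul ->
  is_sym_quotients mul A ->
  semiprime_alg mul A ->
  two_torsion_free A ->
  subalg mul Q -> (forall x, A x -> Q x) ->
  [/\ lq_semiprime mul A (center mul A),
      lq_semiprime mul Q (center mul Q),
      (forall z, center mul A z -> center mul Q z),
      (forall x y, A x -> A y -> center mul Q (x - y) -> center mul A (x - y)) &
      lq_algebra_of_quotients mul Q (sum_set A (center mul Q)) (center mul Q)].
Proof.
move=> HA hsym hsp h2 hQ AQ.
have subA : subalg mul A by case: hsym.
have hspQ := Q_semiprime HA hsym hsp hQ AQ.
have h2Q : two_torsion_free Q := Q_2tf HA (Q:=Q) hsym h2.
have cAQ : forall z, center mul A z -> center mul Q z.
  move=> z [Az hz]; split; first exact: AQ.
  move=> a Qa; apply: (ext_comm HA hsym) => x Ax; by rewrite hz.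
split.
- exact (lie_semiprime HA subA hsp h2).
- exact (lie_semiprime HA hQ hspQ h2Q).
- exact: cAQ.
- move=> x y Ax Ay [_ h]; split; first exact: (submodB HA subA.1 Ax Ay).
  move=> a Aa; apply: h; exact: AQ.
move=> q Qq nq.
have [_ c2 _ _] := hsym.
have [E [hE hEq]] := c2 q.
have [[[E0 ED EZ] EA EL ER] _] := hE.
have [Z0 ZD ZZ] := center_submod HA hQ.1.
have red : forall a0 w e z, A a0 -> center mul Q w -> A e -> center mul Q z ->
    lbr mul (a0 + w) (e + z) = lbr mul a0 e.
  move=> a0 w e z Aa0 Zw Ae Zz.
  rewrite (lbrDl HA) !(lbrDr HA) (center_lbr HA Zz (AQ _ Aa0)).2.
  rewrite (center_lbr HA Zw (AQ _ Ae)).1 (center_lbr HA Zw (center_sub HA Zz)).1.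
  by rewrite !addr0.
exists (sum_set E (center mul Q)); split.
- split.
  + split.
    * move=> x [e [z [Ee Zz ->]]]; exists e, z; split => //; exact: EA.
    * move=> x y [e [z [Ee Zz ->]]] _ hxy; exists e, (y - e); split => //; last by rewrite addrC subrK.
      rewrite (zmod_aux e z y); apply: ZD => //; rewrite -scaleN1r; exact: ZZ.
  + by exists 0, 0; rewrite addr0.
  + move=> x y [e1 [z1 [Ee1 Zz1 ->]]] [e2 [z2 [Ee2 Zz2 ->]]].
    exists (e1 + e2), (z1 + z2); split; [exact: ED|exact: ZD|exact: addrACA].
  + move=> c x [e [z [Ee Zz ->]]]; exists (c *: e), (c *: z); split; [exact: EZ|exact: ZZ|exact: scalerDr].
  + move=> a x [a0 [w [Aa0 Zw ->]]] [e [z [Ee Zz ->]]].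
    rewrite red //; last exact: EA.
    exists (lbr mul a0 e), 0; split => //; last by rewrite addr0.
    apply: ED; first exact: EL.
    rewrite -scaleN1r; apply: EZ; exact: ER.
- move=> a [a0 [w [Aa0 Zw ->]]] ha.
  have Za0 : center mul Q a0.
    apply: (KL HA hsym hsp h2 hQ AQ hE (AQ _ Aa0)) => i Ei.
    have := ha (i + 0); rewrite red //; last exact: EA.
    apply; by exists i, 0.
  exact: ZD.
- apply: NNPP => hno; apply: nq.
  apply: (KL HA hsym hsp h2 hQ AQ hE Qq) => i Ei.
  rewrite (lbrC HA) -scaleN1r; apply: ZZ.
  apply: NNPP => hn; apply: hno; exists (i + 0); split; first by exists i, 0.
  by rewrite addr0.
- move=> x [e [z [Ee Zz ->]]].
  rewrite (lbrDl HA) (center_lbr HA Zz Qq).1 addr0.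
  exists (lbr mul e q), 0; split => //; last by rewrite addr0.
  have [Aeq Aqe] := hEq e Ee.
  exact: (submodB HA subA.1 Aeq Aqe).
Qed.
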